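(* Consider four qubits labelled $\alpha,\beta,1,2$ with Hamiltonian $$H=\frac{h_\alpha}{2}(X_\alpha X_\beta+Y_\alpha Y_\beta)+\frac{h_\beta}{2}(X_\beta X_1+Y_\beta Y_1)+\frac{h_1}{2}(X_1X_2+Y_1Y_2),$$ initial state $\rho_0=\frac I2\otimes\frac{I+X}{2}\otimes\frac I2\otimes\frac I2$ (qubit $\beta$ in the $+1$ eigenstate of $X$, all other qubits maximally mixed), and output $y_h(t)=\operatorname{Tr}\big(Y_\alpha Z_\beta\,e^{-\mathrm{i}Ht}\rho_0e^{\mathrm{i}Ht}\big)$, $t\ge0$, where $h=(h_\alpha,h_\beta,h_1)\in\mathbb{R}^3$. Then for almost every pair $h,h'\in\mathbb{R}^3$ (outside a Lebesgue-null set), $y_h(t)=y_{h'}(t)$ for all $t\ge0$ implies $h_\alpha=h'_\alpha$, $h_\beta^2=h_\beta'^2$ and $h_1^2=h_1'^2$; that is, all parameters are identifiable in magnitude from measurements of $Y_\alpha Z_\beta$.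
   Context: $X,Y,Z$ denote the Pauli matrices $\sigma_x=\begin{pmatrix}0&1\\1&0\end{pmatrix}$, $\sigma_y=\begin{pmatrix}0&-\mathrm{i}\\ \mathrm{i}&0\end{pmatrix}$, $\sigma_z=\begin{pmatrix}1&0\\0&-1\end{pmatrix}$; a subscript indicates the qubit acted on, with identity on the other qubits (tensor products suppressed). $\hbar=1$. Equivalently, $y_h(t)=Ce^{At}B$ where $A$ is the $24\times24$ matrix of the Heisenberg dynamics $\frac{d}{dt}\langle O\rangle=\langle\mathrm{i}[H,O]\rangle$ on the expectations of the 24 Pauli strings generated from $Y_\alpha Z_\beta$, $B$ is the vector of initial expectations (equal to $1$ at $X_\beta$, $0$ elsewhere) and $C$ selects $\langle Y_\alpha Z_\beta\rangle$. *)

(* Defs.v *)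
From Stdlib Require Import Reals Lra List ClassicalEpsilon.
Import ListNotations.
From Stdlib Require Import Factorial.
Open Scope R_scope.

Inductive pauli := PI | PX | PY | PZ.

(** Product of single-qubit Paulis: a * b = i^k * c, returned as (k, c). *)
Definition pmul1 (a b : pauli) : nat * pauli :=
  match a, b with
  | PI, p => (0%nat, p)
  | p, PI => (0%nat, p)
  | PX, PX | PY, PY | PZ, PZ => (0%nat, PI)
  | PX, PY => (1%nat, PZ) | PY, PX => (3%nat, PZ)
  | PY, PZ => (1%nat, PX) | PZ, PY => (3%nat, PX)
  | PZ, PX => (1%nat, PY) | PX, PZ => (3%nat, PY)
  end.

(** Pauli strings on the four qubits (alpha, beta, 1, 2), in that order. *)
Definition pstr : Type := (pauli * pauli * pauli * pauli)%type.

Definition pmul (P O : pstr) : nat * pstr :=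
  let '(a1, a2, a3, a4) := P in
  let '(b1, b2, b3, b4) := O in
  let '(k1, c1) := pmul1 a1 b1 in
  let '(k2, c2) := pmul1 a2 b2 in
  let '(k3, c3) := pmul1 a3 b3 in
  let '(k4, c4) := pmul1 a4 b4 in
  (Nat.modulo (k1 + k2 + k3 + k4) 4, (c1, c2, c3, c4)).

(** i[P,O] = r * Q with real r: if P O = i^k Q then O P = i^{-k} Q, so
    i[P,O] = i (i^k - i^{-k}) Q, which is -2 Q (k=1), 2 Q (k=3), 0 (k even). *)
Definition icomm_coef (k : nat) : R :=
  match k with 1%nat => -2 | 3%nat => 2 | _ => 0 end.

Definition ham_terms (h : R * R * R) : list (R * pstr) :=
  let '(ha, hb, h1) := h in
  [ (ha / 2, (PX, PX, PI, PI)); (ha / 2, (PY, PY, PI, PI));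
    (hb / 2, (PI, PX, PX, PI)); (hb / 2, (PI, PY, PY, PI));
    (h1 / 2, (PI, PI, PX, PX)); (h1 / 2, (PI, PI, PY, PY)) ].

(** Heisenberg generator A acting on vectors of Pauli-string expectations:
    (A v)_O = < i[H,O] > expressed through v. *)
Definition heisA (h : R * R * R) (v : pstr -> R) (O : pstr) : R :=
  fold_right (fun cP acc =>
    let '(c, P) := cP in
    let '(k, Q) := pmul P O in
    acc + c * icomm_coef k * v Q) 0 (ham_terms h).

(** Initial expectations Tr(P rho0), rho0 = I/2 (x) (I+X)/2 (x) I/2 (x) I/2. *)
Definition init_exp (O : pstr) : R :=
  match O with
  | (PI, PI, PI, PI) => 1
  | (PI, PX, PI, PI) => 1
  | _ => 0
  end.

(** Taylor coefficients C A^k B of the output, C selecting <Y_alpha Z_beta>. *)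
Definition out_coef (h : R * R * R) (k : nat) : R :=
  Nat.iter k (heisA h) init_exp (PY, PZ, PI, PI).

(** y_h(t) = C e^{At} B = sum_k t^k/k! C A^k B (the series always converges). *)
Definition yh (h : R * R * R) (t : R) : R :=
  epsilon (inhabits 0)
    (fun l => infinite_sum (fun k => t ^ k / INR (fact k) * out_coef h k) l).

(** Lebesgue-null sets in R^d (points x : nat -> R, only coordinates < d matter):
    coverable by countably many closed boxes of arbitrarily small total volume. *)
Definition box : Type := nat -> R * R.
Definition in_box (d : nat) (B : box) (x : nat -> R) : Prop :=
  forall i, (i < d)%nat -> fst (B i) <= x i <= snd (B i).
Definition box_vol (d : nat) (B : box) : R :=
  fold_right Rmult 1 (map (fun i => snd (B i) - fst (B i)) (seq 0 d)).
Definition lebesgue_null (d : nat) (S : (nat -> R) -> Prop) : Prop :=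
  forall eps, 0 < eps ->
    exists Bs : nat -> box,
      (forall n i, (i < d)%nat -> fst (Bs n i) <= snd (Bs n i)) /\
      (forall x, S x -> exists n, in_box d (Bs n) x) /\
      (forall N, sum_f_R0 (fun n => box_vol d (Bs n)) N < eps).

(* Main.v *)
Require Import Defs.
From Stdlib Require Import Reals.
From Stdlib Require Import Lra Lia Arith ClassicalEpsilon Factorial List.
From Coquelicot Require Import Coquelicot.
Open Scope R_scope.

Ltac ev := cbv [out_coef Nat.iter nat_rect heisA ham_terms List.fold_right pmul pmul1
  icomm_coef init_exp Nat.modulo Nat.divmod Nat.add Nat.sub snd]; field.

Lemma c1 ha hb h1 : out_coef (ha,hb,h1) 1 = - ha.
Proof. ev. Qed.
Lemma c3 ha hb h1 : out_coef (ha,hb,h1) 3 = ha^3 + 4*ha*hb^2.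
Proof. ev. Qed.
Lemma c5 ha hb h1 : out_coef (ha,hb,h1) 5 =
  -ha^5 -17*ha^3*hb^2 -16*ha*hb^4 -6*ha*hb^2*h1^2.
Proof. ev. Qed.

Definition gA (l : list (R * pstr)) (v : pstr -> R) (O : pstr) : R :=
  List.fold_right (fun cP acc =>
    let '(c, P) := cP in
    let '(k, Q) := pmul P O in
    acc + c * icomm_coef k * v Q) 0 l.

Definition gD (l : list (R * pstr)) : R :=
  List.fold_right (fun cP acc => acc + 2 * Rabs (fst cP)) 0 l.

Lemma icomm_bound k : Rabs (icomm_coef k) <= 2.
Proof.
  destruct k as [|[|[|[|k]]]]; simpl; unfold Rabs; destruct Rcase_abs; lra.
Qed.

Lemma gD_pos l : 0 <= gD l.
Proof.
  induction l as [|[c P] l IH]; simpl; [lra|]. pose proof (Rabs_pos c). lra.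
Qed.

Lemma gA_bound l v m O : (forall Q, Rabs (v Q) <= m) ->
  Rabs (gA l v O) <= m * gD l.
Proof.
  intros Hv. induction l as [|[c P] l IH]; simpl.
  - rewrite Rabs_R0. lra.
  - destruct (pmul P O) as [k Q]. fold (gA l v O). fold (gD l).
    eapply Rle_trans; [apply Rabs_triang|].
    rewrite !Rabs_mult.
    pose proof (icomm_bound k). pose proof (Hv Q). pose proof (Rabs_pos c).
    pose proof (Rabs_pos (icomm_coef k)). pose proof (Rabs_pos (v Q)).
    assert (Rabs c * Rabs (icomm_coef k) * Rabs (v Q) <= Rabs c * 2 * m).
    { apply Rmult_le_compat; try apply Rmult_le_compat; try lra.
      apply Rmult_le_pos; lra. }
    lra.
Qed.

Definition Dh h := gD (ham_terms h).

Lemma coef_bound h k O : Rabs (Nat.iter k (heisA h) init_exp O) <= Dh h ^ k.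
Proof.
  revert O. induction k as [|k IH]; intros O.
  - destruct O as [[[a b] c] d]; simpl.
    destruct a, b, c, d; simpl; rewrite ?Rabs_R0, ?Rabs_R1; lra.
  - simpl. change (heisA h (Nat.iter k (heisA h) init_exp) O) with
      (gA (ham_terms h) (Nat.iter k (heisA h) init_exp) O).
    eapply Rle_trans; [apply gA_bound; exact IH|]. unfold Dh. lra.
Qed.

Lemma out_bound h k : Rabs (out_coef h k) <= Dh h ^ k.
Proof. apply coef_bound. Qed.

Lemma ex_ser h t : ex_series (fun k => t ^ k / INR (fact k) * out_coef h k).
Proof.
  set (x := Rabs t * Dh h).
  apply (@ex_series_le R_AbsRing R_CompleteNormedModule) with (b := fun k => x ^ k * / INR (fact k)).
  - intros n. change (norm (t ^ n / INR (fact n) * out_coef h n)) with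
      (Rabs (t ^ n / INR (fact n) * out_coef h n)).
    pose proof (INR_fact_lt_0 n).
    unfold Rdiv. rewrite !Rabs_mult, <- RPow_abs.
    rewrite (Rabs_pos_eq (/ INR (fact n))) by (left; apply Rinv_0_lt_compat; lra).
    unfold x. rewrite Rpow_mult_distr.
    pose proof (out_bound h n).
    assert (0 <= Rabs t ^ n) by (apply pow_le, Rabs_pos).
    assert (0 < / INR (fact n)) by (apply Rinv_0_lt_compat; lra).
    replace (Rabs t ^ n * Dh h ^ n * / INR (fact n)) with
      (Rabs t ^ n * / INR (fact n) * Dh h ^ n) by ring.
    apply Rmult_le_compat_l; [apply Rmult_le_pos; lra| lra].
  - eapply ex_series_ext; [|exists (exp x); apply (is_exp_Reals x)].
    intros n. simpl. rewrite pow_n_pow. reflexivity.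
Qed.

Lemma yh_eq h t : yh h t = Series (fun k => t ^ k / INR (fact k) * out_coef h k).
Proof.
  unfold yh. symmetry. apply is_series_unique. apply is_series_Reals.
  apply epsilon_spec. destruct (ex_ser h t) as [l Hl].
  exists l. apply is_series_Reals. exact Hl.
Qed.

Lemma coef_zero (e : nat -> R) (K D : R) : 0 < D ->
  (forall k, Rabs (e k) <= K * D ^ k) ->
  (forall t, 0 < t -> PSeries e t = 0) -> forall m, e m = 0.
Proof.
  intros HD Hb Hz m. induction m as [m IH] using lt_wf_ind.
  set (b := PS_decr_n e m).
  assert (Hdec : forall t, 0 < t -> PSeries b t = 0).
  { intros t Ht. pose proof (Hz t Ht) as H.
    rewrite (PSeries_decr_n_aux e m t) in H by exact IH.
    apply Rmult_integral in H. destruct H as [H|H]; [|exact H].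
    exfalso. apply (pow_nonzero t m); [lra|exact H]. }
  assert (Hrad : Rbar_lt 0 (CV_radius b)).
  { destruct (CV_radius_bounded b) as [Hub _].
    assert (Hle : Rbar_le (/ D) (CV_radius b)).
    { apply Hub. exists (K * D ^ m). intros n. unfold b, PS_decr_n.
      assert (0 < (/ D) ^ n) by (apply pow_lt, Rinv_0_lt_compat; lra).
      rewrite Rabs_mult, (Rabs_pos_eq ((/ D) ^ n)) by lra.
      eapply Rle_trans; [apply Rmult_le_compat_r; [lra| apply Hb]|].
      rewrite pow_add, pow_inv.
      assert (0 < D ^ n) by (apply pow_lt; lra).
      right. field. lra. }
    eapply Rbar_lt_le_trans; [|exact Hle]. simpl. apply Rinv_0_lt_compat; lra. }
  assert (Hc : continuity_pt (PSeries b) 0).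
  { apply PSeries_continuity. rewrite Rabs_R0. exact Hrad. }
  assert (H0 : PSeries b 0 = 0).
  { destruct (Req_dec (PSeries b 0) 0) as [E|E]; [exact E|exfalso].
    destruct (Hc (Rabs (PSeries b 0))) as [alp [Ha Hal]].
    { apply Rabs_pos_lt. exact E. }
    assert (Hx : D_x no_cond 0 (alp / 2) /\ R_dist (alp / 2) 0 < alp).
    { split. split; [exact I| lra]. unfold R_dist.
      rewrite Rminus_0_r, Rabs_pos_eq; lra. }
    specialize (Hal _ Hx). simpl in Hal. unfold R_dist in Hal.
    rewrite Hdec in Hal by lra. rewrite Rminus_0_l, Rabs_Ropp in Hal. lra. }
  rewrite PSeries_0 in H0. unfold b, PS_decr_n in H0.
  rewrite Nat.add_0_r in H0. exact H0.
Qed.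

Lemma coefs_equal h h' :
  (forall t, 0 <= t -> yh h t = yh h' t) -> forall m, out_coef h m = out_coef h' m.
Proof.
  intros Hy m.
  set (D := Dh h + Dh h' + 1).
  assert (HD0 : 0 <= Dh h) by apply gD_pos.
  assert (HD1 : 0 <= Dh h') by apply gD_pos.
  set (e := fun k => (out_coef h k - out_coef h' k) / INR (fact k)).
  assert (He : forall k, e k = 0).
  { apply (coef_zero e 2 D); [unfold D; lra| |].
    - intros k. unfold e. pose proof (INR_fact_lt_0 k).
      assert (1 <= INR (fact k)).
      { change 1 with (INR 1). apply le_INR. pose proof (lt_O_fact k). lia. }
      unfold Rdiv. rewrite Rabs_mult, (Rabs_pos_eq (/ INR (fact k)))
        by (left; apply Rinv_0_lt_compat; lra).
      assert (/ INR (fact k) <= 1).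
      { rewrite <- Rinv_1. apply Rinv_le_contravar; lra. }
      assert (0 < / INR (fact k)) by (apply Rinv_0_lt_compat; lra).
      pose proof (out_bound h k). pose proof (out_bound h' k).
      assert (Dh h ^ k <= D ^ k) by (apply pow_incr; unfold D; lra).
      assert (Dh h' ^ k <= D ^ k) by (apply pow_incr; unfold D; lra).
      assert (Rabs (out_coef h k - out_coef h' k) <= 2 * D ^ k).
      { unfold Rminus. eapply Rle_trans; [apply Rabs_triang|].
        rewrite Rabs_Ropp. lra. }
      pose proof (Rabs_pos (out_coef h k - out_coef h' k)).
      replace (2 * D ^ k) with (2 * D ^ k * 1) by ring.
      apply Rmult_le_compat; lra.
    - intros t Ht. unfold PSeries.
      rewrite (Series_ext _ (fun k => t ^ k / INR (fact k) * out_coef h k -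
                                     t ^ k / INR (fact k) * out_coef h' k)).
      + rewrite Series_minus by apply ex_ser.
        rewrite <- !yh_eq. rewrite Hy by lra. ring.
      + intros n. unfold e. field. apply INR_fact_neq_0. }
  specialize (He m). unfold e in He.
  pose proof (INR_fact_lt_0 m).
  assert (out_coef h m - out_coef h' m = 0).
  { apply (Rmult_eq_reg_r (/ INR (fact m))).
    - rewrite Rmult_0_l. exact He.
    - apply Rinv_neq_0_compat. lra. }
  lra.
Qed.

Definition Nset (h h' : R * R * R) : Prop :=
  let '(ha, hb, h1) := h in ha = 0 \/ hb = 0.

Lemma geom_sum eps N :
  sum_f_R0 (fun m => eps * / (2 * 2 ^ m)) N = eps * (1 - / 2 ^ (S N)).
Proof.
  induction N as [|N IH].
  - cbn [sum_f_R0 pow]. field.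
  - cbn [sum_f_R0]. rewrite IH. cbn [pow].
    assert (2 ^ N <> 0) by (apply pow_nonzero; lra). field. auto.
Qed.

Lemma nat_big (M : R) : exists K : nat, M <= INR K.
Proof.
  destruct (Rle_lt_dec M 0) as [H|H]; [exists 0%nat; simpl; lra|].
  destruct (archimed_cor1 (/ (M + 1))) as [N [HN HN0]].
  { apply Rinv_0_lt_compat. lra. }
  exists N. destruct (Rle_lt_dec (INR N) (M + 1)) as [H1|H1]; [|lra].
  exfalso. assert (0 < INR N) by (apply lt_0_INR; lia).
  assert (/ (M + 1) <= / INR N) by (apply Rinv_le_contravar; lra). lra.
Qed.

Lemma null_N : lebesgue_null 6
  (fun x => Nset (x 0%nat, x 1%nat, x 2%nat) (x 3%nat, x 4%nat, x 5%nat)).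
Proof.
  intros eps Heps.
  set (dl := fun m : nat => eps * / (4 * 2 ^ m * (2 * INR m + 1) ^ 5)).
  assert (Hdl : forall m, 0 < dl m).
  { intros m. unfold dl. apply Rmult_lt_0_compat; [lra|].
    apply Rinv_0_lt_compat. pose proof (pos_INR m).
    assert (0 < 2 ^ m) by (apply pow_lt; lra).
    assert (0 < (2 * INR m + 1) ^ 5) by (apply pow_lt; lra).
    apply Rmult_lt_0_compat; [|lra]. lra. }
  set (Bs := fun (m : nat) (i : nat) =>
     if Nat.eqb i (if Nat.even m then 0%nat else 1%nat) then (- dl m, dl m)
     else (- INR m, INR m)).
  exists Bs. split; [|split].
  - intros n i _. unfold Bs. pose proof (Hdl n). pose proof (pos_INR n).
    destruct (Nat.eqb _ _); simpl; lra.
  - intros x Hx. simpl in Hx.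
    destruct (nat_big (Rabs (x 0%nat) + Rabs (x 1%nat) + Rabs (x 2%nat) +
                       Rabs (x 3%nat) + Rabs (x 4%nat) + Rabs (x 5%nat))) as [K HK].
    assert (Hab : forall i, (i < 6)%nat -> Rabs (x i) <= INR K).
    { intros i Hi. pose proof (Rabs_pos (x 0%nat)). pose proof (Rabs_pos (x 1%nat)).
      pose proof (Rabs_pos (x 2%nat)). pose proof (Rabs_pos (x 3%nat)).
      pose proof (Rabs_pos (x 4%nat)). pose proof (Rabs_pos (x 5%nat)).
      do 6 (destruct i as [|i]; [lra|]). lia. }
    assert (Hgen : forall m, (K <= m)%nat -> forall i, (i < 6)%nat ->
                   - INR m <= x i <= INR m).
    { intros m Hm i Hi. pose proof (Hab i Hi). apply le_INR in Hm.
      revert H. unfold Rabs. destruct Rcase_abs; intros; lra. }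
    destruct Hx as [Hx|Hx].
    + exists (2 * K)%nat. intros i Hi. unfold Bs. rewrite Nat.even_even.
      destruct (Nat.eqb_spec i 0) as [->|Hne]; cbn [fst snd].
      * pose proof (Hdl (2 * K)%nat). rewrite Hx. lra.
      * apply Hgen; lia.
    + exists (2 * K + 1)%nat. intros i Hi. unfold Bs. rewrite Nat.even_odd.
      destruct (Nat.eqb_spec i 1) as [->|Hne]; cbn [fst snd].
      * pose proof (Hdl (2 * K + 1)%nat). rewrite Hx. lra.
      * apply Hgen; lia.
  - intros N.
    eapply Rle_lt_trans.
    + apply (sum_Rle _ (fun m => eps * / (2 * 2 ^ m))).
      intros m _. unfold box_vol, Bs. simpl.
      pose proof (pos_INR m). pose proof (Hdl m).
      assert (HT : 0 < 2 ^ m) by (apply pow_lt; lra).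
      assert (HP : 0 < (2 * INR m + 1) ^ 5) by (apply pow_lt; lra).
      assert (HQ : (2 * INR m) ^ 5 <= (2 * INR m + 1) ^ 5) by (apply pow_incr; lra).
      assert (HQ0 : 0 <= (2 * INR m) ^ 5) by (apply pow_le; lra).
      assert (key : 2 * dl m * (2 * INR m) ^ 5 <= eps * / (2 * 2 ^ m)).
      { unfold dl.
        replace (2 * (eps * / (4 * 2 ^ m * (2 * INR m + 1) ^ 5)) * (2 * INR m) ^ 5)
          with (eps * / (2 * 2 ^ m) * ((2 * INR m) ^ 5 / (2 * INR m + 1) ^ 5))
          by (field; lra).
        replace (eps * / (2 * 2 ^ m)) with (eps * / (2 * 2 ^ m) * 1) at 2 by ring.
        apply Rmult_le_compat_l.
        - apply Rmult_le_pos; [lra|]. left; apply Rinv_0_lt_compat; lra.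
        - apply (Rmult_le_reg_r ((2 * INR m + 1) ^ 5)); [lra|].
          unfold Rdiv. rewrite Rmult_assoc, Rinv_l by lra. lra. }
      destruct (Nat.even m); simpl; eapply Rle_trans; try apply key; right; ring.
    + rewrite geom_sum.
      assert (0 < / 2 ^ S N) by (apply Rinv_0_lt_compat, pow_lt; lra).
      assert (0 < eps * / 2 ^ S N) by (apply Rmult_lt_0_compat; lra).
      lra.
Qed.

Theorem theorem2 :
  exists Nset : (R * R * R) -> (R * R * R) -> Prop,
    lebesgue_null 6 (fun x => Nset (x 0%nat, x 1%nat, x 2%nat) (x 3%nat, x 4%nat, x 5%nat)) /\
    forall ha hb h1 ha' hb' h1' : R,
      ~ Nset (ha, hb, h1) (ha', hb', h1') ->
      (forall t, 0 <= t -> yh (ha, hb, h1) t = yh (ha', hb', h1') t) ->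
      ha = ha' /\ hb ^ 2 = hb' ^ 2 /\ h1 ^ 2 = h1' ^ 2.
Proof.
  exists Nset. split; [exact null_N|].
  intros ha hb h1 ha' hb' h1' HN Hy.
  simpl in HN.
  assert (Ha : ha <> 0) by tauto. assert (Hb : hb <> 0) by tauto.
  pose proof (coefs_equal _ _ Hy) as Hc.
  pose proof (Hc 1%nat) as E1. rewrite !c1 in E1.
  assert (ha = ha') by lra. subst ha'.
  pose proof (Hc 3%nat) as E3. rewrite !c3 in E3.
  assert (Hb2 : hb ^ 2 = hb' ^ 2).
  { apply (Rmult_eq_reg_l (4 * ha)); [lra|]. intro. apply Ha; lra. }
  pose proof (Hc 5%nat) as E5. rewrite !c5 in E5.
  split; [reflexivity|]. split; [exact Hb2|].
  assert (hb' ^ 4 = hb ^ 4) by (replace 4%nat with (2*2)%nat by reflexivity;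
                                rewrite !pow_mult, Hb2; reflexivity).
  assert (Hk : 6 * ha * hb ^ 2 <> 0).
  { apply Rmult_integral_contrapositive; split.
    - apply Rmult_integral_contrapositive; split; lra.
    - apply pow_nonzero. exact Hb. }
  apply (Rmult_eq_reg_l (6 * ha * hb ^ 2)); [|exact Hk].
  rewrite <- Hb2 in E5. rewrite H in E5. lra.
Qed.
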